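(* For each $p\ge1$ let $\theta=\theta^{(p)},w=w^{(p)}\in\mathbb{R}^p$ (possibly random), $\eta=\theta+w$, and let $\hat\nu=\hat\nu_p$ be an estimator. Suppose there are constants $m\in\mathbb{R}$ and $\nu,\xi\in(0,\infty)$ such that, as $p\to\infty$ (almost surely in the random case): (i) $\bar\theta\to m$ and $\mathrm{var}(\theta)\to\xi^2$; (ii) $\bar w\to0$ and $\mathrm{var}(w)\to\nu^2$; (iii) $\mathrm{cov}(\theta,w)\to0$; (iv) $\hat\nu_p\to\nu$. Let $$\mathrm{SNR}=\frac{\xi}{\nu},\quad r_\infty=\frac1{\sqrt{1+(m/\xi)^2}},\quad c_\infty=\frac{\mathrm{SNR}^2}{1+\mathrm{SNR}^2},\quad d_\infty=c_\infty+\frac{r_\infty^2}{1+\mathrm{SNR}^2}.$$ Let $c=1-\hat\nu^2/\mathrm{var}(\eta)$ and $\eta(c)=\bar\eta+c(\eta-\bar\eta)$. Then $$\mathrm{MSE}_\infty(\eta(c),\theta)=c_\infty\,\mathrm{MSE}_\infty(\eta,\theta)\quad\text{and}\quad \mathrm{SPH}_\infty(\eta(c),\theta)=d_\infty\,\mathrm{SPH}_\infty(\eta,\theta),$$ where the subscript $\infty$ denotes the (almost sure) limit as $p\to\infty$. Moreover, the quantities $c^{\mathrm{MSE}}=\mathrm{cov}(\theta,\eta)/\mathrm{var}(\eta)$ and $c^{\mathrm{SPH}}=(\bar\eta/\bar\theta)\,c^{\mathrm{MSE}}$ converge to $c_\infty$ as $p\to\infty$.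
   Context: For $u,v\in\mathbb{R}^p$: $\bar u=\frac1p\sum_i u_i$, $\mathrm{var}(u)=\frac1p\sum_i(u_i-\bar u)^2$, $\mathrm{cov}(u,v)=\frac1p\sum_i(u_i-\bar u)(v_i-\bar v)$; for $x\in\mathbb{R}$, $u-x$ and $x+u$ are componentwise. $\mathrm{MSE}_p(u,\theta)=\langle u-\theta,u-\theta\rangle/p$ and, for nonzero $u,\theta$, $\mathrm{SPH}_p(u,\theta)=1-\left(\frac{\langle u,\theta\rangle}{|u||\theta|}\right)^2$. The quantities $c^{\mathrm{MSE}}$ and $c^{\mathrm{SPH}}$ are the minimizers over $c$ of $\mathrm{MSE}_p(\eta(c),\theta)$ and $\mathrm{SPH}_p(\eta(c),\theta)$ respectively. *)

(* Defs.v *)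
From HB Require Import structures.
From mathcomp Require Import all_boot all_order all_algebra.
From mathcomp Require Import all_classical all_reals all_analysis.
Set Implicit Arguments. Unset Strict Implicit. Unset Printing Implicit Defensive.
Import Order.TTheory GRing.Theory Num.Theory.
Local Open Scope ring_scope.

Section Defs.
Variable R : realType.
Variable p : nat.
Implicit Types (u v : 'I_p -> R) (x c : R).

Definition mean u : R := (\sum_(i < p) u i) / p%:R.
Definition var u : R := mean (fun i => (u i - mean u) ^+ 2).
Definition cov u v : R := mean (fun i => (u i - mean u) * (v i - mean v)).
Definition dot u v : R := \sum_(i < p) u i * v i.
Definition vnorm u : R := Num.sqrt (dot u u).
Definition MSE u (th : 'I_p -> R) : R :=
  dot (fun i => u i - th i) (fun i => u i - th i) / p%:R.
Definition SPH u (th : 'I_p -> R) : R :=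
  1 - (dot u th / (vnorm u * vnorm th)) ^+ 2.
Definition shrink (eta : 'I_p -> R) c : 'I_p -> R :=
  fun i => mean eta + c * (eta i - mean eta).
Definition cMSE (th eta : 'I_p -> R) : R := cov th eta / var eta.
Definition cSPH (th eta : 'I_p -> R) : R := (mean eta / mean th) * cMSE th eta.
End Defs.

Section Consts.
Variable R : realType.
Definition SNR (xi nu : R) : R := xi / nu.
Definition r_inf (m xi : R) : R := 1 / Num.sqrt (1 + (m / xi) ^+ 2).
Definition c_inf (xi nu : R) : R := SNR xi nu ^+ 2 / (1 + SNR xi nu ^+ 2).
Definition d_inf (m xi nu : R) : R :=
  c_inf xi nu + r_inf m xi ^+ 2 / (1 + SNR xi nu ^+ 2).
End Consts.

(* Main.v *)
Require Import Defs.
From HB Require Import structures.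
From mathcomp Require Import all_boot all_order all_algebra.
From mathcomp Require Import all_classical all_reals all_analysis.
From mathcomp Require Import ring lra.
Import Order.TTheory GRing.Theory Num.Theory numFieldNormedType.Exports.
Local Open Scope ring_scope.
Local Open Scope classical_set_scope.

Section Alg.
Variables (R : realType) (p : nat) (th w : 'I_p -> R).
Hypothesis hp : p%:R != 0 :> R.

Lemma mean_quad al be ga al' be' ga' :
  mean (fun i => (al * th i + be * w i + ga) * (al' * th i + be' * w i + ga')) =
  al*al' * mean (fun i => th i * th i) + (al*be' + be*al') * mean (fun i => th i * w i)
  + be*be' * mean (fun i => w i * w i) + (al*ga' + ga*al') * mean th
  + (be*ga' + ga*be') * mean w + ga*ga'.
Proof.
rewrite /mean.
rewrite (eq_bigr (fun i => al*al' * (th i * th i) + (al*be'+be*al') * (th i * w i)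
  + be*be' * (w i * w i) + (al*ga'+ga*al') * th i + (be*ga'+ga*be') * w i + ga*ga'));
  last by move=> i _; ring.
rewrite !big_split /= -!mulr_sumr sumr_const card_ord -mulr_natr.
by field.
Qed.

Lemma mean_aff al be ga :
  mean (fun i => al * th i + be * w i + ga) = al * mean th + be * mean w + ga.
Proof.
rewrite /mean.
rewrite !big_split /= -!mulr_sumr sumr_const card_ord -mulr_natr.
by field.
Qed.

Let a := mean th.
Let e := mean w.

Lemma relT : mean (fun i => th i * th i) = var th + a ^+ 2.
Proof.
rewrite /var.
have -> : (fun i => (th i - mean th) ^+ 2) = (fun i => (1 * th i + 0 * w i + - a)
   * (1 * th i + 0 * w i + - a)) by apply/funext => i; rewrite /a; ring.
rewrite mean_quad /a; ring.
Qed.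

Lemma relW : mean (fun i => w i * w i) = var w + e ^+ 2.
Proof.
rewrite /var.
have -> : (fun i => (w i - mean w) ^+ 2) = (fun i => (0 * th i + 1 * w i + - e)
   * (0 * th i + 1 * w i + - e)) by apply/funext => i; rewrite /e; ring.
rewrite mean_quad /e; ring.
Qed.

Lemma relX : mean (fun i => th i * w i) = cov th w + a * e.
Proof.
rewrite /cov.
have -> : (fun i => (th i - mean th) * (w i - mean w)) = (fun i => (1 * th i + 0 * w i + - a)
   * (0 * th i + 1 * w i + - e)) by apply/funext => i; rewrite /a /e; ring.
rewrite mean_quad /a /e; ring.
Qed.

Let eta := fun i => th i + w i.

Lemma mean_eta : mean eta = a + e.
Proof.
have -> : eta = (fun i => 1 * th i + 1 * w i + 0) by apply/funext => i; rewrite /eta /=; ring.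
by rewrite mean_aff /a /e !mul1r addr0.
Qed.

Lemma var_eta : var eta = var th + var w + 2 * cov th w.
Proof.
rewrite [var eta]/var mean_eta.
have -> : (fun i => (eta i - (a + e)) ^+ 2) = (fun i => (1 * th i + 1 * w i + - (a + e))
   * (1 * th i + 1 * w i + - (a+e))) by apply/funext => i; rewrite /eta /=; ring.
rewrite mean_quad relT relX relW /a /e; ring.
Qed.

Lemma cov_th_eta : cov th eta = var th + cov th w.
Proof.
rewrite [cov th eta]/cov mean_eta.
have -> : (fun i => (th i - mean th) * (eta i - (a + e))) = (fun i => (1 * th i + 0 * w i + - a)
   * (1 * th i + 1 * w i + - (a+e))) by apply/funext => i; rewrite /eta /a /=; ring.
rewrite mean_quad relT relX relW /a /e; ring.
Qed.

Lemma MSE_eta : MSE eta th = var w + e ^+ 2.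
Proof.
rewrite /MSE.
change (mean (fun i => (eta i - th i) * (eta i - th i)) = var w + e ^+ 2).
have -> : (fun i => (eta i - th i) * (eta i - th i)) = (fun i => (0 * th i + 1 * w i + 0)
   * (0 * th i + 1 * w i + 0)) by apply/funext => i; rewrite /eta /=; ring.
rewrite mean_quad relT relX relW /a /e; ring.
Qed.

Lemma MSE_shrink c : MSE (shrink eta c) th =
  (c - 1) ^+ 2 * var th + c ^+ 2 * var w + 2 * c * (c - 1) * cov th w + e ^+ 2.
Proof.
rewrite /MSE.
change (mean (fun i => (shrink eta c i - th i) * (shrink eta c i - th i)) = 
  (c - 1) ^+ 2 * var th + c ^+ 2 * var w + 2 * c * (c - 1) * cov th w + e ^+ 2).
rewrite /shrink mean_eta.
have -> : (fun i => (a + e + c * (eta i - (a + e)) - th i) * (a + e + c * (eta i - (a + e)) - th i))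
  = (fun i => ((c - 1) * th i + c * w i + (1 - c) * (a + e))
   * ((c - 1) * th i + c * w i + (1 - c) * (a + e))) by apply/funext => i; rewrite /eta /=; ring.
rewrite mean_quad relT relX relW /a /e; ring.
Qed.

Lemma dot_ge0 (u : 'I_p -> R) : 0 <= dot u u.
Proof. by apply: sumr_ge0 => i _; rewrite -expr2 sqr_ge0. Qed.

Lemma SPH_mean (u v : 'I_p -> R) : SPH u v =
  1 - mean (fun i => u i * v i) ^+ 2 /
      (mean (fun i => u i * u i) * mean (fun i => v i * v i)).
Proof.
rewrite /SPH /vnorm expr_div_n exprMn !sqr_sqrtr ?dot_ge0 //.
change (1 - dot u v ^+ 2 / (dot u u * dot v v) =
  1 - (dot u v / p%:R) ^+ 2 / ((dot u u / p%:R) * (dot v v / p%:R))).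
congr (1 - _).
rewrite expr_div_n !invfM ?invrK.
set Ui := (dot u u)^-1; set Vi := (dot v v)^-1.
by field.
Qed.

Lemma SPH_eta : SPH eta th =
  1 - (var th + cov th w + a * (a + e)) ^+ 2 /
      ((var th + var w + 2 * cov th w + (a + e) ^+ 2) * (var th + a ^+ 2)).
Proof.
rewrite SPH_mean.
have -> : (fun i => eta i * th i) = (fun i => (1 * th i + 1 * w i + 0)
   * (1 * th i + 0 * w i + 0)) by apply/funext => i; rewrite /eta /=; ring.
have -> : (fun i => eta i * eta i) = (fun i => (1 * th i + 1 * w i + 0)
   * (1 * th i + 1 * w i + 0)) by apply/funext => i; rewrite /eta /=; ring.
rewrite !mean_quad relT relX relW /a /e.
congr (1 - _ / _); ring.
Qed.

Lemma SPH_shrink c : SPH (shrink eta c) th =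
  1 - (c * (var th + cov th w) + a * (a + e)) ^+ 2 /
      ((c ^+ 2 * (var th + var w + 2 * cov th w) + (a + e) ^+ 2) * (var th + a ^+ 2)).
Proof.
rewrite SPH_mean /shrink mean_eta.
have -> : (fun i => (a + e + c * (eta i - (a + e))) * th i) =
   (fun i => (c * th i + c * w i + (1 - c) * (a + e))
   * (1 * th i + 0 * w i + 0)) by apply/funext => i; rewrite /eta /=; ring.
have -> : (fun i => (a + e + c * (eta i - (a + e))) * (a + e + c * (eta i - (a + e)))) =
   (fun i => (c * th i + c * w i + (1 - c) * (a + e))
   * (c * th i + c * w i + (1 - c) * (a + e))) by apply/funext => i; rewrite /eta /=; ring.
have -> : (fun i => th i * th i) = (fun i => (1 * th i + 0 * w i + 0)
   * (1 * th i + 0 * w i + 0)) by apply/funext => i; ring.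
rewrite !mean_quad relT relX relW /a /e.
congr (1 - _ / _); ring.
Qed.

End Alg.

Section Lim.
Variable R : realType.
Implicit Types (u v : nat -> R) (a b : R).

Lemma LD u v a b : u @ \oo --> a -> v @ \oo --> b -> (fun n => u n + v n) @ \oo --> a + b.
Proof. by move=> hu hv; apply: cvgD. Qed.
Lemma LN u a : u @ \oo --> a -> (fun n => - u n) @ \oo --> - a.
Proof. by move=> hu; apply: cvgN. Qed.
Lemma LM u v a b : u @ \oo --> a -> v @ \oo --> b -> (fun n => u n * v n) @ \oo --> a * b.
Proof. by move=> hu hv; apply: cvgM. Qed.
Lemma LX2 u a : u @ \oo --> a -> (fun n => u n ^+ 2) @ \oo --> a ^+ 2.
Proof. by move=> hu; rewrite expr2; under eq_fun do rewrite expr2; apply: LM. Qed.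
Lemma LDiv u v a b : u @ \oo --> a -> v @ \oo --> b -> b != 0 ->
  (fun n => u n / v n) @ \oo --> a / b.
Proof. by move=> hu hv hb; apply: LM => //; apply: cvgV. Qed.
Lemma Lcst a : (fun n : nat => a) @ \oo --> a.
Proof. exact: cvg_cst. Qed.
Lemma Leq u a b : u @ \oo --> a -> a = b -> u @ \oo --> b.
Proof. by move=> h <-. Qed.
Lemma Lev u v a : (forall n, (0 < n)%N -> u n = v n) -> v @ \oo --> a -> u @ \oo --> a.
Proof.
move=> H hv; apply: cvg_trans hv; apply: near_eq_cvg.
near=> n; apply/esym/H; near: n; by exists 1%N.
Unshelve. all: by end_near.
Qed.
End Lim.

Ltac lim := first [ eassumption | apply: Lcst | apply: LD; [lim|lim] | apply: LN; lim
  | apply: LX2; lim | apply: LDiv; [lim|lim|idtac] | apply: LM; [lim|lim] ].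

Lemma natr_neq0 (R : realType) n : (0 < n)%N -> n%:R != 0 :> R.
Proof. by move=> h; rewrite pnatr_eq0 -lt0n. Qed.

Theorem proposition3 (R : realType)
  (theta w : forall p : nat, 'I_p -> R) (nuhat : nat -> R) (m nu xi : R) :
  0 < nu -> 0 < xi ->
  (fun p => mean (theta p)) @ \oo --> m ->
  (fun p => var (theta p)) @ \oo --> xi ^+ 2 ->
  (fun p => mean (w p)) @ \oo --> 0 ->
  (fun p => var (w p)) @ \oo --> nu ^+ 2 ->
  (fun p => cov (theta p) (w p)) @ \oo --> 0 ->
  nuhat @ \oo --> nu ->
  let eta := fun p (i : 'I_p) => theta p i + w p i in
  let c := fun p => 1 - nuhat p ^+ 2 / var (eta p) in
  (exists L : R,
     (fun p => MSE (eta p) (theta p)) @ \oo --> L /\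
     (fun p => MSE (shrink (eta p) (c p)) (theta p)) @ \oo --> c_inf xi nu * L) /\
  (exists L : R,
     (fun p => SPH (eta p) (theta p)) @ \oo --> L /\
     (fun p => SPH (shrink (eta p) (c p)) (theta p)) @ \oo --> d_inf m xi nu * L) /\
  (fun p => cMSE (theta p) (eta p)) @ \oo --> c_inf xi nu /\
  (m != 0 -> (fun p => cSPH (theta p) (eta p)) @ \oo --> c_inf xi nu).
Proof.
move=> hnu hxi ha hVt he hVw hg hnh eta c.
have hnh' : (fun n => nuhat n) @ \oo --> nu by [].
have nu0 : nu != 0 by rewrite gt_eqF.
have xi0 : xi != 0 by rewrite gt_eqF.
have s0 : xi ^+ 2 + nu ^+ 2 != 0.
  by rewrite gt_eqF // addr_gt0 // exprn_gt0.
have hc : c @ \oo --> 1 - nu ^+ 2 / (xi ^+ 2 + nu ^+ 2).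
  apply: (@Lev _ _ (fun n => 1 - nuhat n ^+ 2 / (var (theta n) + var (w n) + 2 * cov (theta n) (w n)))).
    by move=> n hn; rewrite /c var_eta // natr_neq0.
  apply: Leq; first (apply: LD; [lim|apply: LN; apply: LDiv; [lim|lim|]]).
  - by rewrite mulr0 addr0.
  - by rewrite mulr0 addr0.
set C := 1 - nu ^+ 2 / (xi ^+ 2 + nu ^+ 2) in hc.
have X2 : 0 < xi ^+ 2 by rewrite exprn_gt0.
have N2 : 0 < nu ^+ 2 by rewrite exprn_gt0.
have M2 : 0 <= m ^+ 2 by exact: sqr_ge0.
have CE : C = xi ^+ 2 / (xi ^+ 2 + nu ^+ 2) by rewrite /C; field.
have C0 : 0 < C by rewrite CE divr_gt0 // addr_gt0.
have s1 : 1 + (xi / nu) ^+ 2 != 0.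
  by rewrite (gt_eqF (ltr_wpDr (sqr_ge0 _) ltr01)).
have s2 : xi ^+ 2 + m ^+ 2 != 0 by rewrite (gt_eqF (ltr_wpDr M2 X2)).
have s3 : xi ^+ 2 + nu ^+ 2 + m ^+ 2 != 0 by rewrite (gt_eqF (ltr_wpDr M2 (addr_gt0 X2 N2))).
have s4 : C ^+ 2 * (xi ^+ 2 + nu ^+ 2) + m ^+ 2 != 0.
  by rewrite (gt_eqF (ltr_wpDr M2 (mulr_gt0 (exprn_gt0 2 C0) (addr_gt0 X2 N2)))).
have s5 : 1 + (m / xi) ^+ 2 != 0.
  by rewrite (gt_eqF (ltr_wpDr (sqr_ge0 _) ltr01)).
have s0' : nu ^+ 2 + xi ^+ 2 != 0 by rewrite addrC.
have s6 : xi ^+ 4 + m ^+ 2 * (xi ^+ 2 + nu ^+ 2) != 0.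
  by rewrite (gt_eqF (ltr_wpDr (mulr_ge0 M2 (ltW (addr_gt0 X2 N2))) (exprn_gt0 4 hxi))).
have r2 : r_inf m xi ^+ 2 = 1 / (1 + (m / xi) ^+ 2).
  by rewrite /r_inf expr_div_n sqr_sqrtr ?expr1n // addr_ge0 // sqr_ge0.
split; [|split; [|split]].
- exists (nu ^+ 2); split.
  + apply: (@Lev _ _ (fun n => var (w n) + mean (w n) ^+ 2)).
      by move=> n hn; rewrite /eta MSE_eta // natr_neq0.
    by apply: Leq; first lim; rewrite expr0n /= addr0.
  + apply: (@Lev _ _ (fun n => (c n - 1) ^+ 2 * var (theta n) + c n ^+ 2 * var (w n)
       + 2 * c n * (c n - 1) * cov (theta n) (w n) + mean (w n) ^+ 2)).
      by move=> n hn; rewrite /eta MSE_shrink // natr_neq0.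
    apply: Leq; first lim.
    rewrite /c_inf /SNR CE; field.
    by rewrite nu0 addrC s0.
- exists (1 - (xi ^+ 2 + m ^+ 2) ^+ 2 / ((xi ^+ 2 + nu ^+ 2 + m ^+ 2) * (xi ^+ 2 + m ^+ 2))); split.
  + apply: (@Lev _ _ (fun n => 1 - (var (theta n) + cov (theta n) (w n) + mean (theta n) * (mean (theta n) + mean (w n))) ^+ 2 /
      ((var (theta n) + var (w n) + 2 * cov (theta n) (w n) + (mean (theta n) + mean (w n)) ^+ 2) * (var (theta n) + mean (theta n) ^+ 2)))).
      by move=> n hn; rewrite /eta SPH_eta // natr_neq0.
    apply: Leq; first (apply: LD; [lim|apply: LN; apply: LDiv; [lim|lim|]]).
    * by rewrite !mulr0 !addr0 mulf_neq0.
    * rewrite !mulr0 !addr0; congr (1 - (_ + _) ^+ 2 / _); rewrite expr2 //.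
  + apply: (@Lev _ _ (fun n => 1 - (c n * (var (theta n) + cov (theta n) (w n)) + mean (theta n) * (mean (theta n) + mean (w n))) ^+ 2 /
      ((c n ^+ 2 * (var (theta n) + var (w n) + 2 * cov (theta n) (w n)) + (mean (theta n) + mean (w n)) ^+ 2) * (var (theta n) + mean (theta n) ^+ 2)))).
      by move=> n hn; rewrite /eta SPH_shrink // natr_neq0.
    apply: Leq; first (apply: LD; [lim|apply: LN; apply: LDiv; [lim|lim|]]).
    * by rewrite !mulr0 !addr0 mulf_neq0.
    * rewrite !mulr0 !addr0 /d_inf r2 /c_inf /SNR CE.
      field.
      by rewrite s2 s3 nu0 s0' xi0 s6.
- apply: (@Lev _ _ (fun n => (var (theta n) + cov (theta n) (w n)) / (var (theta n) + var (w n) + 2 * cov (theta n) (w n)))).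
    by move=> n hn; rewrite /cMSE /eta cov_th_eta ?var_eta // natr_neq0.
  apply: Leq; first (apply: LDiv; [lim|lim|]).
  + by rewrite mulr0 addr0.
  + rewrite mulr0 !addr0 /c_inf /SNR; field.
    by rewrite nu0 s0'.
- move=> m0.
  apply: (@Lev _ _ (fun n => (mean (theta n) + mean (w n)) / mean (theta n) * ((var (theta n) + cov (theta n) (w n)) / (var (theta n) + var (w n) + 2 * cov (theta n) (w n))))).
    by move=> n hn; rewrite /cSPH /cMSE /eta cov_th_eta ?var_eta ?mean_eta // natr_neq0.
  apply: Leq; first (apply: LM; [apply: LDiv; [lim|lim|] | apply: LDiv; [lim|lim|]]).
  + by [].
  + by rewrite mulr0 addr0.
  + rewrite mulr0 !addr0 /c_inf /SNR; field.
    by rewrite nu0 s0' m0.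
Qed.
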